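(* Let $\mathbf{k}$ be a field, $Q$ a finite connected quiver, $\Lambda=\mathbf{k}Q/\mathcal{J}^2$ ($\mathcal{J}$ the arrow ideal), $n\ge2$, and assume $\mathcal{C}\subseteq\operatorname{mod}\Lambda$ is an $n$-cluster tilting subcategory. Let $v\in Q_0$. (a) If $\delta^+(v)=2$, then $\delta^-(v)\ge1$. (b) If $\delta^-(v)=2$, then $\delta^+(v)\ge1$. (c) If $\delta^-(v)=\delta^+(v)=2$, then $n=2$.
   Context: Modules are finite-dimensional right modules. $\mathcal{C}$ is $n$-cluster tilting if it is functorially finite and $\mathcal{C}=\{X\mid \operatorname{Ext}^i(X,\mathcal{C})=0\ \forall 0<i<n\}=\{X\mid\operatorname{Ext}^i(\mathcal{C},X)=0\ \forall 0<i<n\}$. $\delta^-(v)$, $\delta^+(v)$ are the numbers of arrows ending, resp. starting, at $v$. *)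

(* Defs.v *)
From HB Require Import structures.
From mathcomp Require Import all_boot all_order all_algebra.
Set Implicit Arguments. Unset Strict Implicit. Unset Printing Implicit Defensive.
Import GRing.Theory.
Local Open Scope ring_scope.

Record quiver := Quiver {
  Q0 : finType; Q1 : finType;
  qs : Q1 -> Q0; qt : Q1 -> Q0 }.
Arguments Q0 : clear implicits. Arguments Q1 : clear implicits.
Arguments qs {_} _. Arguments qt {_} _.
Set Implicit Arguments.

Definition qadj (Q : quiver) : rel (Q0 Q) := fun u w =>
  [exists a : Q1 Q, ((qs a == u) && (qt a == w)) || ((qs a == w) && (qt a == u))].
Definition connected_quiver (Q : quiver) : Prop :=
  forall u w : Q0 Q, connect (@qadj Q) u w.

(* delta^+(v) = arrows starting at v, delta^-(v) = arrows ending at v. *)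
Definition outdeg (Q : quiver) (v : Q0 Q) : nat := #|[set a : Q1 Q | qs a == v]|.
Definition indeg  (Q : quiver) (v : Q0 Q) : nat := #|[set a : Q1 Q | qt a == v]|.

(* A finite-dimensional right module over Lambda = kQ/J^2: a k-space k^mdim
   (row vectors) with right action given by matrices for the standard
   generators e_v (vertices) and a (arrows) of kQ, subject to the defining
   relations of kQ/J^2 (paths composed left to right: a = e_{s a} a e_{t a}). *)
Record rmod (k : fieldType) (Q : quiver) := RMod {
  mdim : nat;
  me : Q0 Q -> 'M[k]_mdim;
  ma : Q1 Q -> 'M[k]_mdim;
  me_orth : forall u w, me u *m me w = if u == w then me u else 0;
  me_sum : \sum_(u : Q0 Q) me u = 1%:M;
  ma_idem : forall a, me (qs a) *m ma a *m me (qt a) = ma a;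
  ma_rad2 : forall a b, ma a *m ma b = 0 }.

Section Homological.
Variables (k : fieldType) (Q : quiver).
Local Notation mod := (rmod k Q).

Definition is_hom (X Y : mod) (f : 'M[k]_(mdim X, mdim Y)) : Prop :=
  (forall v, me X v *m f = f *m me Y v) /\ (forall a, ma X a *m f = f *m ma Y a).

Definition is_exact (l m p : nat) (f : 'M[k]_(l, m)) (g : 'M[k]_(m, p)) : Prop :=
  f *m g = 0 /\ (kermx g <= f)%MS.

Definition projective (P : mod) : Prop :=
  forall (X Z : mod) (g : 'M[k]_(mdim X, mdim Z)), is_hom g -> row_full g ->
  forall h : 'M[k]_(mdim P, mdim Z), is_hom h ->
  exists l : 'M[k]_(mdim P, mdim X), is_hom l /\ l *m g = h.

Definition proj_res (X : mod) (P : nat -> mod)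
  (d : forall j, 'M[k]_(mdim (P j.+1), mdim (P j)))
  (eps : 'M[k]_(mdim (P 0), mdim X)) : Prop :=
  [/\ forall j, projective (P j),
      forall j, is_hom (d j),
      is_hom eps /\ row_full eps,
      is_exact (d 0) eps &
      forall j, is_exact (d j.+1) (d j)].

(* Ext^{j+1}(X, Y) = H^{j+1}(Hom(P_., Y)) = 0 for a projective resolution P of X. *)
Definition ext_vanish (i : nat) (X Y : mod) : Prop :=
  match i with
  | 0 => forall f : 'M[k]_(mdim X, mdim Y), is_hom f -> f = 0
  | j.+1 => forall P d eps, @proj_res X P d eps ->
      forall f : 'M[k]_(mdim (P j.+1), mdim Y), is_hom f -> d j.+1 *m f = 0 ->
      exists g : 'M[k]_(mdim (P j), mdim Y), is_hom g /\ f = d j *m g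
  end.

Definition contravariantly_finite (C : mod -> Prop) : Prop :=
  forall X : mod, exists (CX : mod) (f : 'M[k]_(mdim CX, mdim X)),
    [/\ C CX, is_hom f &
      forall (Y : mod) (g : 'M[k]_(mdim Y, mdim X)), C Y -> is_hom g ->
        exists h : 'M[k]_(mdim Y, mdim CX), is_hom h /\ g = h *m f].

Definition covariantly_finite (C : mod -> Prop) : Prop :=
  forall X : mod, exists (CX : mod) (f : 'M[k]_(mdim X, mdim CX)),
    [/\ C CX, is_hom f &
      forall (Y : mod) (g : 'M[k]_(mdim X, mdim Y)), C Y -> is_hom g ->
        exists h : 'M[k]_(mdim CX, mdim Y), is_hom h /\ g = f *m h].

Definition functorially_finite (C : mod -> Prop) : Prop :=
  contravariantly_finite C /\ covariantly_finite C.

Definition n_cluster_tilting (n : nat) (C : mod -> Prop) : Prop :=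
  [/\ functorially_finite C,
      (forall X : mod, C X <->
         (forall i, (0 < i < n)%N -> forall Y : mod, C Y -> ext_vanish i X Y)) &
      (forall X : mod, C X <->
         (forall i, (0 < i < n)%N -> forall Y : mod, C Y -> ext_vanish i Y X))].

End Homological.

(* Main.v *)
Require Import Defs.
From mathcomp Require Import all_boot all_order all_algebra.
Set Implicit Arguments. Unset Strict Implicit. Unset Printing Implicit Defensive.
Import GRing.Theory.
Local Open Scope ring_scope.

Section Main.
Variables (k : fieldType) (Q : quiver).
Local Notation mod := (rmod k Q).

Lemma me_ma (M : mod) u a :
  me M u *m ma M a = if u == qs a then ma M a else 0.
Proof.
rewrite -{1}(ma_idem M a) !mulmxA me_orth.
case: eqP => [->|_]; last by rewrite !mul0mx.
exact: ma_idem.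
Qed.

Lemma ma_me (M : mod) a u :
  ma M a *m me M u = if qt a == u then ma M a else 0.
Proof.
rewrite -{1}(ma_idem M a) -!mulmxA me_orth.
case: eqP => [_|_]; last by rewrite !mulmx0.
by rewrite mulmxA ma_idem.
Qed.

Definition dg n (l : 'I_n -> Q0 Q) u : 'M[k]_n := diag_mx (\row_i ((l i == u)%:R)).

Lemma dgE n (l : 'I_n -> Q0 Q) u i j : dg l u i j = ((i == j) && (l i == u))%:R.
Proof. by rewrite /dg !mxE; case: (i == j); rewrite ?mulr0n ?mulr1n. Qed.

Lemma dg_mull n p (l : 'I_n -> Q0 Q) u (F : 'M[k]_(n, p)) i j :
  (dg l u *m F) i j = (l i == u)%:R * F i j.
Proof. by rewrite /dg mul_diag_mx !mxE. Qed.

Lemma dg_mulr n p (l : 'I_p -> Q0 Q) u (F : 'M[k]_(n, p)) i j :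
  (F *m dg l u) i j = F i j * (l j == u)%:R.
Proof. by rewrite /dg mul_mx_diag !mxE. Qed.

Lemma dg_orth n (l : 'I_n -> Q0 Q) u w :
  dg l u *m dg l w = if u == w then dg l u else 0.
Proof.
apply/matrixP => i j; rewrite dg_mull dgE.
case: (eqVneq u w) => [<-|uw].
  by rewrite dgE; case: (l i == u); case: (i == j); rewrite ?mul1r ?mul0r.
rewrite mxE; case: (eqVneq (l i) u) => [li|]; last by rewrite mul0r.
by rewrite li (negbTE uw) andbF mulr0.
Qed.

Lemma dg_sum n (l : 'I_n -> Q0 Q) : \sum_u dg l u = 1%:M.
Proof.
apply/matrixP => i j; rewrite summxE mxE.
rewrite (bigD1 (l i)) //= dgE eqxx andbT big1 ?addr0 //.
by move=> u nu; rewrite dgE (eq_sym (l i)) (negbTE nu) andbF.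
Qed.

Section LM.
Variables (t s : nat) (lt : 'I_t -> Q0 Q) (ls : 'I_s -> Q0 Q)
  (A : Q1 Q -> 'M[k]_(t, s)).
Hypothesis HA : forall a i j, A a i j != 0 -> (lt i == qs a) && (ls j == qt a).

Definition lme u : 'M[k]_(t + s) := block_mx (dg lt u) 0 0 (dg ls u).
Definition lma a : 'M[k]_(t + s) := block_mx 0 (A a) 0 0.

Lemma lme_orth u w : lme u *m lme w = if u == w then lme u else 0.
Proof.
rewrite /lme mulmx_block !mulmx0 !mul0mx !addr0 !add0r !dg_orth.
by case: eqP => // _; rewrite block_mx0.
Qed.

Lemma lme_sum : \sum_u lme u = 1%:M.
Proof.
have -> : \sum_u lme u = block_mx (\sum_u dg lt u) 0 0 (\sum_u dg ls u).
  apply: (big_rec3 (fun x y z => x = block_mx y 0 0 z)); first by rewrite block_mx0.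
  by move=> i y1 y2 y3 _ ->; rewrite /lme add_block_mx !addr0.
by rewrite !dg_sum -scalar_mx_block.
Qed.

Lemma lma_idem a : lme (qs a) *m lma a *m lme (qt a) = lma a.
Proof.
rewrite /lme /lma !mulmx_block !mulmx0 !mul0mx !addr0 !add0r.
congr (block_mx _ _ _ _); rewrite ?mul0mx //.
apply/matrixP => i j; rewrite dg_mulr dg_mull.
case H: (A a i j != 0); last by move/negbFE/eqP: H => ->; rewrite !mulr0 mul0r.
by case/andP: (HA H) => /eqP -> /eqP ->; rewrite !eqxx mul1r mulr1.
Qed.

Lemma lma_rad2 a b : lma a *m lma b = 0.
Proof. by rewrite /lma mulmx_block !mulmx0 !mul0mx !addr0 block_mx0. Qed.

Definition LM : mod := @RMod k Q (t + s) lme lma lme_orth lme_sum lma_idem lma_rad2.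

End LM.

Arguments LM : clear implicits.

Section LMhom.
Variables (t1 s1 : nat) (lt1 : 'I_t1 -> Q0 Q) (ls1 : 'I_s1 -> Q0 Q)
  (A1 : Q1 Q -> 'M[k]_(t1, s1))
  (HA1 : forall a i j, A1 a i j != 0 -> (lt1 i == qs a) && (ls1 j == qt a)).
Variables (t2 s2 : nat) (lt2 : 'I_t2 -> Q0 Q) (ls2 : 'I_s2 -> Q0 Q)
  (A2 : Q1 Q -> 'M[k]_(t2, s2))
  (HA2 : forall a i j, A2 a i j != 0 -> (lt2 i == qs a) && (ls2 j == qt a)).
Local Notation X := (LM t1 s1 lt1 ls1 A1 HA1).
Local Notation Y := (LM t2 s2 lt2 ls2 A2 HA2).

Lemma lm_homP (F11 : 'M[k]_(t1, t2)) F12 F21 F22 :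
  is_hom (X:=X) (Y:=Y) (block_mx F11 F12 F21 F22) <->
  [/\ forall u, dg lt1 u *m F11 = F11 *m dg lt2 u,
      forall u, dg lt1 u *m F12 = F12 *m dg ls2 u,
      forall u, dg ls1 u *m F21 = F21 *m dg lt2 u,
      forall u, dg ls1 u *m F22 = F22 *m dg ls2 u &
      forall a, [/\ A1 a *m F21 = 0, A1 a *m F22 = F11 *m A2 a & F21 *m A2 a = 0]].
Proof.
rewrite /is_hom /= /lme /lma; split.
  case=> Hme Hma; split.
  - by move=> u; have := Hme u; rewrite !mulmx_block !mulmx0 !mul0mx !addr0 !add0r; case/eq_block_mx.
  - by move=> u; have := Hme u; rewrite !mulmx_block !mulmx0 !mul0mx !addr0 !add0r; case/eq_block_mx.
  - by move=> u; have := Hme u; rewrite !mulmx_block !mulmx0 !mul0mx !addr0 !add0r; case/eq_block_mx.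
  - by move=> u; have := Hme u; rewrite !mulmx_block !mulmx0 !mul0mx !addr0 !add0r; case/eq_block_mx.
  move=> a; have := Hma a; rewrite !mulmx_block !mulmx0 !mul0mx !addr0 !add0r.
  by case/eq_block_mx => E1 E2 _ E4; split => //; rewrite -E4.
case=> H1 H2 H3 H4 H5; split.
  by move=> u; rewrite !mulmx_block !mulmx0 !mul0mx !addr0 !add0r H1 H2 H3 H4.
move=> a; case: (H5 a) => E1 E2 E3.
by rewrite !mulmx_block !mulmx0 !mul0mx !addr0 !add0r E1 E2 E3.
Qed.

End LMhom.

(* projective covers of semisimple data *)
Definition Bt n (l : 'I_n -> Q0 Q) := {p : 'I_n * Q1 Q | qs p.2 == l p.1}.
Definition nn n (l : 'I_n -> Q0 Q) := #|{: Bt l}|.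
Definition ev n (l : 'I_n -> Q0 Q) (j : 'I_(nn l)) : 'I_n * Q1 Q := val (enum_val j).
Arguments ev [n] l j.
Definition nl n (l : 'I_n -> Q0 Q) (j : 'I_(nn l)) : Q0 Q := qt (ev l j).2.
Arguments nl [n] l j.
Definition Apc n (l : 'I_n -> Q0 Q) a : 'M[k]_(n, nn l) :=
  \matrix_(i, j) (ev l j == (i, a))%:R.

Lemma ev_inj n (l : 'I_n -> Q0 Q) : injective (@ev n l).
Proof. by move=> i j /val_inj /enum_val_inj. Qed.

Lemma evP n (l : 'I_n -> Q0 Q) j : qs (ev l j).2 == l (ev l j).1.
Proof. exact: (valP (enum_val j)). Qed.

Lemma Apc_compat n (l : 'I_n -> Q0 Q) a i j :
  Apc l a i j != 0 -> (l i == qs a) && (nl l j == qt a).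
Proof.
rewrite mxE; case: (ev l j =P (i, a)) => [E|]; last by rewrite eqxx.
move=> _; have := @evP n l j; rewrite /nl E /= eq_sym => ->.
by rewrite eqxx.
Qed.

Definition PC n (l : 'I_n -> Q0 Q) : mod := LM n (nn l) l (nl l) (Apc l) (@Apc_compat n l).

Definition lab0 (T : Type) (j : 'I_0) : T :=
  False_rect T (elimF idP (ltn0 j) (ltn_ord j)).

Lemma A0_compat n (l : 'I_n -> Q0 Q) a (i : 'I_n) (j : 'I_0) :
  (0 : 'M[k]_(n, 0)) i j != 0 -> (l i == qs a) && (lab0 _ j == qt a).
Proof. by case: j. Qed.

Definition SS n (l : 'I_n -> Q0 Q) : mod :=
  LM n 0 l (@lab0 _) (fun _ => 0) (@A0_compat n l).

Definition TT (v : Q0 Q) := {a : Q1 Q | qt a == v}.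
Definition mT v := #|{: TT v}|.
Definition tv v (t : 'I_(mT v)) : Q1 Q := val (enum_val t).
Definition lT v (t : 'I_(mT v)) := qs (tv t).
Definition AI v a : 'M[k]_(mT v, 1) := \matrix_(t, j) (tv t == a)%:R.

Lemma AI_compat v a i (j : 'I_1) :
  AI v a i j != 0 -> (lT i == qs a) && ((fun _ => v) j == qt a).
Proof.
rewrite mxE; case: (tv i =P a) => [E|]; last by rewrite eqxx.
move=> _; rewrite /lT E eqxx /=; have := valP (enum_val i).
by rewrite -/(tv i) E eq_sym.
Qed.

Definition Iv v : mod := LM (mT v) 1 (@lT v) (fun _ => v) (AI v) (@AI_compat v).
Definition Pv v : mod := PC (fun _ : 'I_1 => v).


Lemma row_dg n p (l : 'I_n -> Q0 Q) u (F : 'M[k]_(n, p)) i :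
  row i (dg l u *m F) = (l i == u)%:R *: row i F.
Proof. by apply/rowP => j; rewrite [LHS]mxE dg_mull !mxE. Qed.

Lemma row_Apc n (l : 'I_n -> Q0 Q) a p (F : 'M[k]_(nn l, p)) i :
  row i (Apc l a *m F) = \sum_j (ev l j == (i, a))%:R *: row j F.
Proof. by rewrite row_mul mulmx_sum_row; apply: eq_bigr => j _; rewrite !mxE. Qed.

Lemma sum_ev_in n (l : 'I_n -> Q0 Q) p (F : 'I_(nn l) -> 'rV[k]_p) (x : Bt l) :
  \sum_j (ev l j == val x)%:R *: F j = F (enum_rank x).
Proof.
rewrite (bigD1 (enum_rank x)) //= /ev enum_rankK eqxx scale1r big1 ?addr0 //.
move=> j nj; case: eqP => [E|]; last by rewrite scale0r.
by case/eqP: nj; apply: enum_val_inj; rewrite enum_rankK; apply: val_inj.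
Qed.

Lemma sum_ev_out n (l : 'I_n -> Q0 Q) p (F : 'I_(nn l) -> 'rV[k]_p) i a :
  qs a != l i -> \sum_j (ev l j == (i, a))%:R *: F j = 0.
Proof.
move=> H; apply: big1 => j _; case: eqP => [E|]; last by rewrite scale0r.
by have := @evP n l j; rewrite E /= (negbTE H).
Qed.

Definition pcx n (l : 'I_n -> Q0 Q) i a (H : qs a == l i) : Bt l :=
  exist (fun p : 'I_n * Q1 Q => qs p.2 == l p.1) (i, a) H.

Lemma PC_homE n (l : 'I_n -> Q0 Q) (Y : mod) (g : 'M[k]_(n + nn l, mdim Y)) :
  is_hom (X:=PC l) (Y:=Y) g ->
  (forall i, row i (usubmx g) *m me Y (l i) = row i (usubmx g)) /\
  (forall j, row j (dsubmx g) = row (ev l j).1 (usubmx g) *m ma Y (ev l j).2).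
Proof.
case=> Hme Hma; rewrite -[g]vsubmxK in Hme Hma.
split.
  move=> i; have := Hme (l i); rewrite /= /lme mul_block_col mul_col_mx !mul0mx !addr0 add0r.
  by case/eq_col_mx => E _; rewrite -row_mul -E row_dg eqxx scale1r.
move=> j; have := Hma (ev l j).2; rewrite /= /lma mul_block_col mul_col_mx !mul0mx !add0r.
case/eq_col_mx => E _; rewrite -row_mul -E row_Apc.
have -> : ev l j = val (enum_val j) by [].
by rewrite -surjective_pairing sum_ev_in enum_valK.
Qed.

Lemma PC_homI n (l : 'I_n -> Q0 Q) (Y : mod) (g1 : 'M[k]_(n, mdim Y)) :
  (forall i, row i g1 *m me Y (l i) = row i g1) ->
  is_hom (X:=PC l) (Y:=Y)
    (col_mx g1 (\matrix_j (row (ev l j).1 g1 *m ma Y (ev l j).2))).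
Proof.
move=> H1; set g2 := \matrix_j _; split.
  move=> u; rewrite /= /lme mul_block_col mul_col_mx !mul0mx !addr0 add0r.
  congr col_mx; apply/row_matrixP => i; rewrite row_dg row_mul.
    rewrite -[in RHS]H1 -mulmxA me_orth.
    by case: eqP => _; [rewrite scale1r H1 | rewrite scale0r mulmx0].
  rewrite /g2 rowK -mulmxA ma_me /nl eq_sym.
  by case: eqP => _; rewrite ?scale1r ?scale0r ?mulmx0.
move=> a; rewrite /= /lma mul_block_col mul_col_mx !mul0mx !add0r.
congr col_mx; apply/row_matrixP => i.
  rewrite row_Apc row_mul; case: (boolP (qs a == l i)) => H.
    by rewrite (sum_ev_in (fun j => row j g2) (pcx H)) /g2 rowK /ev enum_rankK /=.
  rewrite sum_ev_out // -H1 -mulmxA me_ma eq_sym (negbTE H) mulmx0 //.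
by rewrite row_mul rowK -mulmxA ma_rad2 mulmx0 row0.
Qed.


Lemma homM (X Y Z : mod) (f : 'M[k]_(mdim X, mdim Y)) (g : 'M[k]_(mdim Y, mdim Z)) :
  is_hom f -> is_hom g -> is_hom (f *m g).
Proof.
case=> f1 f2 [g1 g2]; split.
  by move=> u; rewrite mulmxA f1 -mulmxA g1 mulmxA.
by move=> a; rewrite mulmxA f2 -mulmxA g2 mulmxA.
Qed.

Lemma homB (X Y : mod) (f g : 'M[k]_(mdim X, mdim Y)) :
  is_hom f -> is_hom g -> is_hom (f - g).
Proof.
case=> f1 f2 [g1 g2]; split.
  by move=> u; rewrite mulmxBr mulmxBl f1 g1.
by move=> a; rewrite mulmxBr mulmxBl f2 g2.
Qed.

Lemma hom1 (X : mod) : is_hom (1%:M : 'M[k]_(mdim X)).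
Proof. by split=> *; rewrite mul1mx mulmx1. Qed.

Lemma PC_proj n (l : 'I_n -> Q0 Q) : projective (PC l).
Proof.
move=> X Z g Hg Hfull h Hh.
have [Hh1 Hh2] := PC_homE Hh.
set Y1 := usubmx h *m pinvmx g.
set L1 := \matrix_i (row i Y1 *m me X (l i)).
have HL1 : L1 *m g = usubmx (h : 'M_(n + nn l, _)).
  apply/row_matrixP => i; rewrite row_mul /L1 rowK -mulmxA (proj1 Hg) mulmxA.
  by rewrite -row_mul /Y1 mulmxKpV ?submx_full // Hh1.
exists (col_mx L1 (\matrix_j (row (ev l j).1 L1 *m ma X (ev l j).2))).
split.
  by apply: PC_homI => i; rewrite /L1 rowK -mulmxA me_orth eqxx.
rewrite -[h]vsubmxK mul_col_mx HL1; congr col_mx.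
apply/row_matrixP => j; rewrite row_mul rowK -mulmxA (proj2 Hg) mulmxA.
by rewrite -row_mul HL1 Hh2.
Qed.

Section Sub.
Variables (Z : mod) (r : nat) (B : 'M[k]_(r, mdim Z)).
Hypothesis HB : row_free B.
Hypothesis Hme : forall u, (B *m me Z u <= B)%MS.
Hypothesis Hma : forall a, (B *m ma Z a <= B)%MS.

Definition sme u := B *m me Z u *m pinvmx B.
Definition sma a := B *m ma Z a *m pinvmx B.
Lemma smeB u : sme u *m B = B *m me Z u. Proof. exact: mulmxKpV. Qed.
Lemma smaB a : sma a *m B = B *m ma Z a. Proof. exact: mulmxKpV. Qed.

Lemma sme_orth u w : sme u *m sme w = if u == w then sme u else 0.
Proof.
apply: (row_free_inj HB); rewrite /= -mulmxA smeB mulmxA smeB -mulmxA me_orth.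
by case: eqP => _; rewrite ?smeB ?mul0mx ?mulmx0.
Qed.

Lemma sme_sum : \sum_u sme u = 1%:M.
Proof.
apply: (row_free_inj HB); rewrite /= mulmx_suml.
rewrite (eq_bigr (fun u => B *m me Z u)); last by move=> u _; rewrite smeB.
by rewrite -mulmx_sumr me_sum mulmx1 mul1mx.
Qed.

Lemma sma_idem a : sme (qs a) *m sma a *m sme (qt a) = sma a.
Proof.
apply: (row_free_inj HB); rewrite /= smaB -mulmxA smeB mulmxA.
rewrite -[sme _ *m sma _ *m B]mulmxA smaB mulmxA smeB.
by rewrite -!mulmxA (mulmxA (me Z _)) ma_idem.
Qed.

Lemma sma_rad2 a b : sma a *m sma b = 0.
Proof.
apply: (row_free_inj HB); rewrite /= -mulmxA smaB mulmxA smaB -mulmxA ma_rad2.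
by rewrite mulmx0 mul0mx.
Qed.

Lemma mulKpV_aux (M : mod) (F : 'M[k]_(mdim M, mdim Z)) C :
  (F <= B)%MS -> F *m C *m pinvmx B = F *m pinvmx B *m (B *m C *m pinvmx B).
Proof. by move=> HF; rewrite [RHS]mulmxA [F *m _ *m (B *m C)]mulmxA mulmxKpV. Qed.

Definition Sub : mod := @RMod k Q r sme sma sme_orth sme_sum sma_idem sma_rad2.

Lemma hom_Sub (M : mod) (F : 'M[k]_(mdim M, mdim Z)) :
  is_hom F -> (F <= B)%MS -> is_hom (X:=M) (Y:=Sub) (F *m pinvmx B).
Proof.
case=> F1 F2 HF; split.
  move=> u; rewrite /= /sme mulmxA F1; exact: mulKpV_aux.
by move=> a; rewrite /= /sma mulmxA F2; exact: mulKpV_aux.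
Qed.

End Sub.

Lemma proj_lift (P X Z : mod) (g : 'M[k]_(mdim X, mdim Z)) (h : 'M[k]_(mdim P, mdim Z)) :
  projective P -> is_hom g -> is_hom h -> (h <= g)%MS ->
  exists l : 'M[k]_(mdim P, mdim X), is_hom l /\ l *m g = h.
Proof.
move=> HP Hg Hh hg.
set B := row_base g.
have gB : (g <= B)%MS by rewrite /B eq_row_base.
have Bg : (B <= g)%MS by rewrite /B eq_row_base.
have HB : row_free B by exact: row_base_free.
have Hme : forall u, (B *m me Z u <= B)%MS.
  move=> u; apply: submx_trans (submxMr _ Bg) _.
  by rewrite -(proj1 Hg); apply: submx_trans (submxMl _ _) gB.
have Hma : forall a, (B *m ma Z a <= B)%MS.
  move=> a; apply: submx_trans (submxMr _ Bg) _.
  by rewrite -(proj2 Hg); apply: submx_trans (submxMl _ _) gB.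
have Hg' := hom_Sub HB Hme Hma Hg gB.
have Hh' := hom_Sub HB Hme Hma Hh (submx_trans hg gB).
have Hfull : row_full (g *m pinvmx B).
  rewrite /row_full eqn_leq rank_leq_col /=.
  by rewrite -{1}(mulmxKpV gB) mxrankM_maxl.
have [l [Hl E]] := HP _ _ _ Hg' Hfull _ Hh'.
exists l; split => //.
by rewrite -(mulmxKpV gB) mulmxA E mulmxKpV // (submx_trans hg gB).
Qed.


Lemma ker_sub (p m q r : nat) (A : 'M[k]_(p, m)) (d : 'M[k]_(m, q)) (d' : 'M[k]_(r, m)) :
  A *m d = 0 -> (kermx d <= d')%MS -> exists D : 'M[k]_(p, r), A = D *m d'.
Proof.
move=> Ad kd; have : (A <= d')%MS by apply: submx_trans kd; apply/sub_kermxP.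
by case/submxP => D ->; exists D.
Qed.

Lemma proj_ext (P : mod) : projective P -> forall j (Y : mod), ext_vanish j.+1 P Y.
Proof.
move=> HP j Y R d eps [Hproj Hd [He Hef] Hex0 Hex] f Hf Hdf.
have Hs : forall j, exists s : 'M[k]_(mdim (R j), mdim (R j.+1)),
    is_hom s /\ d j *m s *m d j = d j.
  elim=> [|i [s [Hs Es]]].
    have [σ [Hσ Eσ]] := HP _ _ eps He Hef _ (hom1 P).
    set e := 1%:M - eps *m σ.
    have He' : is_hom e by apply: homB; [exact: hom1 | exact: homM].
    have ee : e *m eps = 0 by rewrite mulmxBl mul1mx -mulmxA Eσ mulmx1 subrr.
    have [D ED] := ker_sub ee (proj2 Hex0).
    have [s [Hs Es]] := proj_lift (Hproj 0%N) (Hd 0%N) He' (introT submxP (ex_intro _ D ED)).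
    exists s; split => //.
    by rewrite -mulmxA Es mulmxBr mulmx1 mulmxA (proj1 Hex0) mul0mx subr0.
  set e := 1%:M - d i *m s.
  have He' : is_hom e by apply: homB; [exact: hom1 | exact: homM].
  have ee : e *m d i = 0 by rewrite mulmxBl mul1mx Es subrr.
  have [D ED] := ker_sub ee (proj2 (Hex i)).
  have [s' [Hs' Es']] := proj_lift (Hproj i.+1) (Hd i.+1) He' (introT submxP (ex_intro _ D ED)).
  exists s'; split => //.
  by rewrite -mulmxA Es' mulmxBr mulmx1 mulmxA (proj1 (Hex i)) mul0mx subr0.
have [s [Hs0 Es]] := Hs j.
exists (s *m f); split; first exact: homM Hs0 Hf.
set e := 1%:M - d j *m s.
have ee : e *m d j = 0 by rewrite mulmxBl mul1mx Es subrr.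
have [D ED] := ker_sub ee (proj2 (Hex j)).
have : e *m f = 0 by rewrite ED -mulmxA Hdf mulmx0.
by rewrite mulmxBl mul1mx mulmxA => /eqP; rewrite subr_eq0 => /eqP.
Qed.


Lemma colspace_ker (p m q : nat) (d : 'M[k]_(p, m)) (x : 'M[k]_(p, q)) :
  kermx d *m x = 0 -> exists y : 'M[k]_(m, q), x = d *m y.
Proof.
move=> H.
have H1 : (x^T <= kermx (kermx d)^T)%MS by apply/sub_kermxP; rewrite -trmx_mul H trmx0.
have H2 : (d^T <= kermx (kermx d)^T)%MS by apply/sub_kermxP; rewrite -trmx_mul mulmx_ker trmx0.
have H3 : (kermx (kermx d)^T <= d^T)%MS.
  rewrite -(mxrank_leqif_sup H2) mxrank_tr mxrank_ker mxrank_tr mxrank_ker.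
  by rewrite subKn ?rank_leq_row.
have [D ED] := submxP (submx_trans H1 H3).
by exists D^T; rewrite -[x]trmxK ED trmx_mul trmxK.
Qed.

Lemma mx_colE (m p n : nat) (A : 'M[k]_(m, p)) (G : 'I_n -> 'M[k]_(p, 1)) r t :
  (A *m \matrix_(i, j) (G j i 0)) r t = (A *m G t) r 0.
Proof. by rewrite !mxE; apply: eq_bigr => i _; rewrite mxE. Qed.

Definition Psi (M : mod) v (c : 'M[k]_(mdim M, 1)) : 'M[k]_(mdim M, mT v + 1) :=
  row_mx (\matrix_(r, t) ((ma M (tv t) *m c) r 0)) c.

Lemma tvP v t : qt (tv (v:=v) t) == v.
Proof. exact: (valP (enum_val t)). Qed.

Lemma sum_tv v (F : 'I_(mT v) -> k) a :
  \sum_t (tv t == a)%:R * F t =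
  if qt a == v =P true is ReflectT H then F (enum_rank (exist _ a H : TT v)) else 0.
Proof.
case: eqP => [H|H].
  rewrite (bigD1 (enum_rank (exist _ a H : TT v))) //= /tv enum_rankK eqxx mul1r.
  rewrite big1 ?addr0 // => t nt; case: eqP => [E|]; last by rewrite mul0r.
  by case/eqP: nt; apply: enum_val_inj; rewrite enum_rankK; apply: val_inj.
apply: big1 => t _; case: eqP => [E|]; last by rewrite mul0r.
by case: H; rewrite -E tvP.
Qed.

Lemma Psi_hom (M : mod) v (c : 'M[k]_(mdim M, 1)) :
  me M v *m c = c -> is_hom (X:=M) (Y:=Iv v) (Psi v c).
Proof.
move=> Hc; split.
  move=> u; rewrite /= /lme /Psi mul_mx_row mul_row_block ?mulmx0 ?addr0 ?add0r.
  congr row_mx.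
    apply/matrixP => r t; rewrite dg_mulr mx_colE mulmxA me_ma [in RHS]mxE /lT eq_sym.
    by case: eqP => _; [rewrite mulr1 | rewrite mul0mx mulr0 mxE].
  rewrite -{1}Hc mulmxA me_orth; apply/matrixP => r i; rewrite dg_mulr.
  case: (eqVneq u v) => [->|uv]; first by rewrite Hc mulr1.
  by rewrite mul0mx mxE mulr0.
move=> a; rewrite /= /lma /Psi mul_mx_row mul_row_block !mulmx0 !addr0 ?add0r.
congr row_mx.
  by apply/matrixP => r t; rewrite mx_colE mulmxA ma_rad2 mul0mx !mxE.
apply/matrixP => r i; rewrite [RHS]mxE (ord1 i).
under eq_bigr do rewrite [AI _ _ _ _]mxE mulrC.
rewrite sum_tv; case: eqP => [H|H].
  by rewrite mxE /tv enum_rankK.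
rewrite -Hc mulmxA ma_me; case: eqP => E; first by case: H; rewrite E eqxx.
by rewrite mul0mx mxE.
Qed.

Lemma Psi_E (M : mod) v (F : 'M[k]_(mdim M, mT v + 1)) :
  is_hom (X:=M) (Y:=Iv v) F -> F = Psi v (rsubmx F) /\ me M v *m rsubmx F = rsubmx F.
Proof.
case=> Hme Hma; rewrite -[F]hsubmxK in Hme Hma *.
rewrite row_mxKr; set F1 := lsubmx F; set c := rsubmx F.
split.
  congr row_mx; apply/matrixP => r t.
  have := Hma (tv t); rewrite /= /lma mul_mx_row mul_row_block ?mulmx0 ?addr0 ?add0r.
  case/eq_row_mx => _ E; rewrite [RHS]mxE E [RHS]mxE.
  under eq_bigr do rewrite [AI _ _ _ _]mxE mulrC.
  rewrite sum_tv; case: eqP => [H|]; last by rewrite tvP.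
  congr (lsubmx F r _); apply: enum_val_inj; rewrite enum_rankK; apply: val_inj.
  by [].
have := Hme v; rewrite /= /lme mul_mx_row mul_row_block ?mulmx0 ?addr0 ?add0r.
case/eq_row_mx => _ ->; apply/matrixP => r i.
by rewrite dg_mulr eqxx mulr1.
Qed.

Lemma Psi_mul (A B : mod) v (d : 'M[k]_(mdim A, mdim B)) (c : 'M[k]_(mdim B, 1)) :
  is_hom d -> d *m Psi v c = Psi v (d *m c).
Proof.
case=> _ Hd; rewrite /Psi mul_mx_row; congr row_mx.
by apply/matrixP => r t; rewrite mx_colE mulmxA -Hd -mulmxA [RHS]mxE.
Qed.

Lemma Iv_inj v (A B : mod) (d : 'M[k]_(mdim A, mdim B)) (f : 'M[k]_(mdim A, mdim (Iv v))) :
  is_hom d -> is_hom f -> kermx d *m f = 0 ->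
  exists g : 'M[k]_(mdim B, mdim (Iv v)), is_hom g /\ f = d *m g.
Proof.
move=> Hd Hf Hk; have [Ef Ec] := Psi_E Hf.
have : kermx d *m rsubmx (f : 'M_(_, mT v + 1)) = 0 by rewrite mulmx_rsub Hk; apply/matrixP => i j; rewrite !mxE.
case/colspace_ker => y Ey.
exists (Psi v (me B v *m y)); split.
  by apply: Psi_hom; rewrite mulmxA me_orth eqxx.
rewrite Psi_mul // Ef; congr Psi.
by rewrite mulmxA -(proj1 Hd) -mulmxA -Ey Ec.
Qed.

Lemma Iv_ext v j (Y : mod) : ext_vanish j.+1 Y (Iv v).
Proof.
move=> R d eps [Hproj Hd [He Hef] Hex0 Hex] f Hf Hdf.
apply: Iv_inj => //.
have [D ED] := ker_sub (mulmx_ker (d j)) (proj2 (Hex j)).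
by rewrite ED -mulmxA Hdf mulmx0.
Qed.


Fixpoint rd n0 (l0 : 'I_n0 -> Q0 Q) (j : nat) : {n : nat & 'I_n -> Q0 Q} :=
  match j with
  | 0 => existT _ n0 l0
  | j'.+1 => existT _ (nn (projT2 (rd l0 j'))) (nl (projT2 (rd l0 j')))
  end.

Definition PCr n0 (l0 : 'I_n0 -> Q0 Q) j : mod := PC (projT2 (rd l0 j)).

Definition dr n0 (l0 : 'I_n0 -> Q0 Q) j : 'M[k]_(mdim (PCr l0 j.+1), mdim (PCr l0 j)) :=
  block_mx 0 1%:M 0 0.

Lemma dr_hom n (l : 'I_n -> Q0 Q) :
  is_hom (X:=PC (nl l)) (Y:=PC l) (block_mx 0 1%:M 0 0).
Proof.
apply/lm_homP; split => [u|u|u|u|a]; rewrite ?mulmx0 ?mul0mx ?mulmx1 ?mul1mx //.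
Qed.

Lemma blk_ker a b b' c (E : 'M[k]_(a + b, c)) :
  (forall A : 'M[k]_(a + b, a + b), A *m E = 0 -> lsubmx A = 0) ->
  (kermx E <= block_mx (0 : 'M[k]_(b, a)) 1%:M (0 : 'M[k]_(b', a)) 0)%MS.
Proof.
move=> H; have HK := H _ (mulmx_ker E).
apply/submxP; exists (row_mx (rsubmx (kermx E)) 0).
rewrite mul_row_block ?mulmx0 ?mul0mx ?addr0 mulmx1 -[LHS]hsubmxK HK.
by [].
Qed.

Section Spl.
Variables (m : nat) (l : 'I_m -> Q0 Q) (kk : nat) (lk : 'I_kk -> Q0 Q)
  (Iota : 'M[k]_(kk, nn l)).

Definition sP j : mod := match j with 0 => PC l | j'.+1 => PCr lk j' end.
Definition sD j : 'M[k]_(mdim (sP j.+1), mdim (sP j)) :=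
  match j return 'M[k]_(mdim (sP j.+1), mdim (sP j)) with
  | 0 => block_mx 0 Iota 0 0
  | j'.+1 => dr lk j'
  end.

Lemma spl_res (X : mod) (eps0 : 'M[k]_(m + nn l, mdim X)) (R : 'M[k]_(nn l, kk)) :
  is_hom (X:=PC l) (Y:=X) eps0 -> row_full eps0 ->
  block_mx (0 : 'M[k]_(kk, m)) Iota (0 : 'M[k]_(nn lk, m)) 0 *m eps0 = 0 ->
  (kermx eps0 <= block_mx (0 : 'M[k]_(kk, m)) Iota (0 : 'M[k]_(nn lk, m)) 0)%MS ->
  Iota *m R = 1%:M ->
  (forall u, dg lk u *m Iota = Iota *m dg (nl l) u) ->
  proj_res sD eps0.
Proof.
move=> He Hf H0 Hk HR Hlab; split => //.
- by case=> [|j]; apply: PC_proj.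
- case=> [|j]; last exact: dr_hom.
  apply/lm_homP; split => [u|u|u|u|a]; rewrite ?mulmx0 ?mul0mx //.
- case=> [|j]; split.
  + by rewrite /= /dr mulmx_block ?mulmx0 ?mul0mx ?addr0 ?mul1mx block_mx0.
  + apply: blk_ker => A; rewrite -[A]hsubmxK mul_row_block ?mulmx0 ?mul0mx ?addr0 ?add0r.
    rewrite -row_mx0 => /eq_row_mx [_ E]; rewrite row_mxKl.
    by rewrite -[lsubmx A]mulmx1 -HR mulmxA E mul0mx.
  + by rewrite /= /dr mulmx_block ?mulmx0 ?mul0mx ?addr0 ?mul1mx block_mx0.
  + apply: blk_ker => A; rewrite /= /dr -[A]hsubmxK mul_row_block ?mulmx0 ?mul0mx ?addr0 ?add0r.
    by rewrite -row_mx0 => /eq_row_mx [_ E]; rewrite row_mxKl -E mulmx1.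
Qed.

End Spl.


Lemma sum_ev_s n (l : 'I_n -> Q0 Q) (F : 'I_(nn l) -> k) (x : Bt l) :
  \sum_j (ev l j == val x)%:R * F j = F (enum_rank x).
Proof.
rewrite (bigD1 (enum_rank x)) //= /ev enum_rankK eqxx mul1r big1 ?addr0 //.
move=> j nj; case: eqP => [E|]; last by rewrite mul0r.
by case/eqP: nj; apply: enum_val_inj; rewrite enum_rankK; apply: val_inj.
Qed.

Lemma ev_rank n (l : 'I_n -> Q0 Q) (x : Bt l) : ev l (enum_rank x) = val x.
Proof. by rewrite /ev enum_rankK. Qed.

Lemma L_ext1 n (L : 'I_n -> Q0 Q) v (b0 : 'I_n) a0 a1 :
  L b0 = v -> qs a0 = v -> qs a1 = v -> a0 != a1 ->
  ~ (forall f : 'M[k]_(nn L + nn (nl L), mdim (Pv v)),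
       is_hom (X:=PC (nl L)) (Y:=Pv v) f ->
       (block_mx 0 1%:M 0 0 : 'M[k]_(nn (nl L) + nn (nl (nl L)), nn L + nn (nl L))) *m f = 0 ->
       exists g : 'M[k]_(n + nn L, mdim (Pv v)), is_hom (X:=PC L) (Y:=Pv v) g /\
         f = (block_mx 0 1%:M 0 0 : 'M[k]_(nn L + nn (nl L), n + nn L)) *m g).
Proof.
move=> Hb H0 H1 a01 Hv.
pose lv := fun _ : 'I_1 => v.
pose phi : 'M[k]_(nn L, nn lv) :=
  \matrix_(j, y) ((ev L j == (b0, a0)) && (ev lv y == (ord0, a0)))%:R.
have Hf : is_hom (X:=PC (nl L)) (Y:=Pv v) (block_mx (0 : 'M[k]_(nn L, 1)) phi 0 0).
  apply/lm_homP; split => [u|u|u|u|a]; rewrite ?mulmx0 ?mul0mx //.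
  apply/matrixP => j y; rewrite dg_mull dg_mulr mxE.
  case: andP => [[/eqP E1 /eqP E2]|_]; last by rewrite mulr0 mul0r.
  by rewrite /nl E1 E2 /= mulr1 mul1r.
have [g [Hg Eg]] : exists g : 'M[k]_(n + nn L, mdim (Pv v)), is_hom (X:=PC L) (Y:=Pv v) g /\
    block_mx (0 : 'M[k]_(nn L, 1)) phi 0 0 =
    (block_mx 0 1%:M 0 0 : 'M[k]_(nn L + nn (nl L), n + nn L)) *m g.
  by apply: Hv => //; rewrite mulmx_block ?mulmx0 ?mul0mx ?addr0 block_mx0.
move: Hg Eg; rewrite -[g]submxK => Hg.
rewrite mulmx_block ?mul0mx ?mul1mx ?add0r ?addr0 => /eq_block_mx [_ Ephi _ _].
move/lm_homP: Hg => [_ _ _ _ H5].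
have key : forall a (Ha : qs a == L b0) (Hv' : qs a == lv ord0),
    (((b0, a) == (b0, a0)) && ((ord0, a) == (@ord0 0, a0)))%:R = ulsubmx g b0 ord0 :> k.
  move=> a Ha Hv'; have [_ E2 _] := H5 a.
  have := congr1 (fun M : 'M[k]_(n, nn lv) => M b0 (enum_rank (pcx Hv'))) E2.
  rewrite -Ephi [LHS]mxE [RHS]mxE big_ord1.
  under eq_bigr do rewrite [Apc _ _ _ _]mxE.
  rewrite (sum_ev_s (fun j => phi j _) (pcx Ha)) [Apc _ _ _ _]mxE ev_rank eqxx mulr1 => <-.
  by rewrite /phi mxE !ev_rank.
have Ha0 : qs a0 == L b0 by rewrite H0 Hb.
have Ha1 : qs a1 == L b0 by rewrite H1 Hb.
have Hv0 : qs a0 == lv ord0 by rewrite H0.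
have Hv1 : qs a1 == lv ord0 by rewrite H1.
have := key _ Ha1 Hv1; rewrite -(key _ Ha0 Hv0) !eqxx /= xpair_eqE eqxx /= eq_sym (negbTE a01).
by move=> /eqP; rewrite eq_sym oner_eq0.
Qed.


Lemma Apc_out v a : qs a != v -> Apc (fun _ : 'I_1 => v) a = 0 :> 'M[k]_(1, _).
Proof.
move=> Ha; apply/matrixP => i y; rewrite !mxE; case: eqP => // E.
by have := @evP 1 (fun _ => v) y; rewrite E /= (negbTE Ha).
Qed.

Lemma L_extb m (l : 'I_m -> Q0 Q) kk (lk : 'I_kk -> Q0 Q) (Iota : 'M[k]_(kk, nn l))
  (X : mod) (eps0 : 'M[k]_(m + nn l, mdim X)) v (b0 : 'I_kk) :
  lk b0 = v -> (forall a, qs a != v) -> proj_res (sD (l:=l) lk Iota) eps0 ->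
  ~ ext_vanish 1 X (Pv v).
Proof.
move=> Hb Hout Hres Hv.
pose phi : 'M[k]_(kk, 1) := \matrix_(j, i) (j == b0)%:R.
have Hf : is_hom (X:=PC lk) (Y:=Pv v)
    (block_mx phi (0 : 'M[k]_(kk, nn (fun _ : 'I_1 => v))) (0 : 'M[k]_(nn lk, 1)) 0).
  apply/lm_homP; split => [u|u|u|u|a]; rewrite ?mulmx0 ?mul0mx ?Apc_out ?mulmx0 //.
  apply/matrixP => j i; rewrite dg_mull dg_mulr mxE.
  by case: (j =P b0) => [->|_]; [rewrite Hb mulr1 mul1r | rewrite mulr0 mul0r].
have [g [Hg Eg]] : exists g : 'M[k]_(m + nn l, mdim (Pv v)), is_hom (X:=PC l) (Y:=Pv v) g /\
    block_mx phi 0 0 0 = (block_mx 0 Iota 0 0 : 'M[k]_(kk + nn lk, m + nn l)) *m g.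
  apply: (Hv _ _ _ Hres _ Hf).
  by rewrite /= /dr mulmx_block ?mulmx0 ?mul0mx ?addr0 ?mul1mx block_mx0.
have [_ Hd] := PC_homE Hg.
have D0 : dsubmx g = 0.
  apply/row_matrixP => j; rewrite Hd row0 /= /lma Apc_out ?block_mx0 ?mulmx0 //.
have Z : (block_mx 0 Iota 0 0 : 'M[k]_(kk + nn lk, m + nn l)) *m g = 0.
  by rewrite -[g]vsubmxK D0 mul_block_col ?mulmx0 ?mul0mx ?addr0 col_mx0.
have := congr1 (fun M : 'M[k]_(kk + nn lk, 1 + nn (fun _ : 'I_1 => v)) =>
  M (lshift _ b0) (lshift _ ord0)) Eg.
rewrite Z block_mxEul mxE eqxx mxE => /eqP; by rewrite oner_eq0.
Qed.


Lemma sum_pick1 n (F : 'I_n -> k) q : \sum_p (p == q)%:R * F p = F q.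
Proof.
rewrite (bigD1 q) //= eqxx mul1r big1 ?addr0 // => p /negbTE ->; by rewrite mul0r.
Qed.

Lemma sum_ev_out_s n (l : 'I_n -> Q0 Q) (F : 'I_(nn l) -> k) i a :
  qs a != l i -> \sum_j (ev l j == (i, a))%:R * F j = 0.
Proof.
move=> H; apply: big1 => j _; case: eqP => [E|]; last by rewrite mul0r.
by have := @evP n l j; rewrite E /= (negbTE H).
Qed.

Section IvRes.
Variable v : Q0 Q.
Local Notation lTv := (@lT v).

Definition dgl (p : 'I_(nn lTv)) : bool := (ev lTv p).2 == tv (ev lTv p).1.
Definition Dcol : 'M[k]_(nn lTv, 1) := \matrix_(p, i) (dgl p)%:R.
Definition epsI : 'M[k]_(mT v + nn lTv, mT v + 1) := block_mx 1%:M 0 0 Dcol.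

Lemma dgl_nl p : dgl p -> nl lTv p = v.
Proof. by move/eqP => E; rewrite /nl E; apply/eqP; apply: tvP. Qed.

Lemma epsI_hom : is_hom (X:=PC lTv) (Y:=Iv v) epsI.
Proof.
apply/lm_homP; split => [u|u|u|u|a]; rewrite ?mulmx0 ?mul0mx ?mulmx1 ?mul1mx //.
  apply/matrixP => p i; rewrite dg_mull dg_mulr mxE.
  by case H: (dgl p); rewrite ?mulr0 ?mul0r // (dgl_nl H) mulr1 mul1r.
split => //; apply/matrixP => t i; rewrite !mxE.
under eq_bigr do rewrite [Apc _ _ _ _]mxE [Dcol _ _]mxE.
case: (boolP (qs a == lTv t)) => H.
  rewrite (sum_ev_s (fun p => (dgl p)%:R) (pcx H)) /dgl ev_rank /=.
  by rewrite eq_sym.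
rewrite sum_ev_out_s //; case: eqP => // E.
by move: H; rewrite /lT E eqxx.
Qed.

Variable i0 : 'I_(nn lTv).
Hypothesis Hi0 : dgl i0.

Lemma epsI_full : row_full epsI.
Proof.
rewrite -sub1mx; apply/submxP.
exists (block_mx 1%:M 0 0 (\matrix_(i, p) (p == i0)%:R)).
rewrite mulmx_block ?mulmx0 ?mul0mx ?addr0 ?add0r ?mul1mx ?mulmx1 scalar_mx_block.
congr block_mx; apply/matrixP => i j; rewrite !mxE (ord1 i) (ord1 j) /=.
under eq_bigr do rewrite !mxE.
by rewrite sum_pick1 Hi0.
Qed.

Definition kk := (nn lTv).-1.
Definition lk (j : 'I_kk) : Q0 Q := nl lTv (lift i0 j).
Definition Iota : 'M[k]_(kk, nn lTv) :=
  \matrix_(j, p) ((p == lift i0 j)%:R - ((dgl (lift i0 j)) && (p == i0))%:R).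
Definition Rm : 'M[k]_(nn lTv, kk) := \matrix_(p, j) (p == lift i0 j)%:R.

Lemma Iota_Dcol : Iota *m Dcol = 0.
Proof.
apply/matrixP => j i; rewrite !mxE.
under eq_bigr do rewrite !mxE mulrBl.
rewrite sumrB sum_pick1; case H: (dgl (lift i0 j)) => /=.
  by rewrite sum_pick1 Hi0 subrr.
by rewrite big1 ?subr0 // => p _; rewrite mul0r.
Qed.

Lemma Iota_R : Iota *m Rm = 1%:M.
Proof.
apply/matrixP => j j'; rewrite !mxE.
under eq_bigr do rewrite !mxE mulrC.
rewrite sum_pick1 (inj_eq (@lift_inj _ i0)) eq_sym.
by rewrite [lift _ _ == i0]eq_sym (negbTE (neq_lift _ _)) andbF subr0.
Qed.

Lemma Iota_lab u : dg lk u *m Iota = Iota *m dg (nl lTv) u.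
Proof.
apply/matrixP => j p; rewrite dg_mull dg_mulr mxE.
case: (eqVneq p (lift i0 j)) => [->|np].
  by rewrite [lift _ _ == i0]eq_sym (negbTE (neq_lift _ _)) andbF subr0 mulr1 mul1r.
rewrite sub0r; case: (eqVneq p i0) => [Ep|]; rewrite ?andbF ?andbT ?oppr0 ?mulr0 ?mul0r //.
case H: (dgl (lift i0 j)); rewrite ?oppr0 ?mulr0 ?mul0r //.
by rewrite /lk (dgl_nl H) Ep (dgl_nl Hi0) mulrC.
Qed.

Lemma R_Iota p (W : 'M[k]_(p, nn lTv)) : W *m Dcol = 0 -> W *m Rm *m Iota = W.
Proof.
move=> HW; apply/matrixP => r q; rewrite !mxE.
have WR : forall j, (W *m Rm) r j = W r (lift i0 j).
  move=> j; rewrite !mxE; under eq_bigr do rewrite !mxE mulrC.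
  by rewrite sum_pick1.
under eq_bigr do rewrite WR !mxE.
have HW0 := congr1 (fun M : 'M[k]_(p, 1) => M r ord0) HW.
move: HW0; rewrite !mxE (bigD1_ord i0) //= mxE Hi0 mulr1.
under eq_bigr do rewrite mxE.
move=> HW0.
case: (eqVneq q i0) => [->|nq].
  under eq_bigr do rewrite [i0 == lift _ _](negbTE (neq_lift _ _)) andbT sub0r mulrN.
  by rewrite sumrN; apply/eqP; rewrite eq_sym -subr_eq0 opprK HW0.
have nq' : i0 != q by rewrite eq_sym.
have [j' Ej' _] := unlift_some nq'.
rewrite Ej'; under eq_bigr do rewrite andbF subr0 (inj_eq (@lift_inj _ i0)).
rewrite (bigD1 j') //= eqxx mulr1 big1 ?addr0 // => j /negbTE nj.
by rewrite eq_sym nj mulr0.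
Qed.

Lemma ker_epsI : (kermx epsI <= block_mx (0 : 'M[k]_(kk, mT v)) Iota (0 : 'M[k]_(nn lk, mT v)) 0)%MS.
Proof.
have HK := mulmx_ker epsI.
move: HK; rewrite -[kermx epsI]hsubmxK mul_row_block ?mulmx0 ?mulmx1 ?addr0 ?add0r -row_mx0.
case/eq_row_mx => K1 K2.
apply/submxP; exists (row_mx (rsubmx (kermx epsI) *m Rm) 0).
rewrite mul_row_block ?mulmx0 ?mul0mx ?addr0 ?add0r R_Iota //.
by rewrite K1.
Qed.

Lemma Iota_eps : block_mx (0 : 'M[k]_(kk, mT v)) Iota (0 : 'M[k]_(nn lk, mT v)) 0 *m epsI = 0.
Proof.
by rewrite mulmx_block ?mulmx0 ?mul0mx ?addr0 ?add0r Iota_Dcol block_mx0.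
Qed.

Lemma Iv_res : proj_res (X:=Iv v) (sD (l:=lTv) lk Iota) epsI.
Proof.
apply: (spl_res (R:=Rm)) => //.
- exact: epsI_hom.
- exact: epsI_full.
- exact: Iota_eps.
- exact: ker_epsI.
- exact: Iota_R.
- exact: Iota_lab.
Qed.

End IvRes.


Lemma epsA_res v : (forall t : 'I_(mT v), False) ->
  proj_res (X:=Iv v) (sD (l:=fun _ : 'I_1 => v) (nl (fun _ : 'I_1 => v)) 1%:M)
    (block_mx (0 : 'M[k]_(1, mT v)) 1%:M (0 : 'M[k]_(nn (fun _ : 'I_1 => v), mT v)) 0).
Proof.
move=> Hno; apply: (spl_res (R:=1%:M)).
- apply/lm_homP; split => [u|u|u|u|a]; rewrite ?mulmx0 ?mul0mx ?mulmx1 ?mul1mx //.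
- rewrite -sub1mx; apply/submxP.
  exists (block_mx (0 : 'M[k]_(mT v, 1)) 0 1%:M 0).
  rewrite mulmx_block ?mulmx0 ?mul0mx ?addr0 ?add0r ?mul1mx ?mulmx1 scalar_mx_block.
  congr block_mx; apply/matrixP => i; case: (Hno i).
- by rewrite mulmx_block ?mulmx0 ?mul0mx ?addr0 ?add0r block_mx0.
- apply: blk_ker => A; rewrite -[A]hsubmxK mul_row_block ?mulmx0 ?mul0mx ?addr0 ?add0r.
  by rewrite -row_mx0 => /eq_row_mx [_ E]; rewrite row_mxKl -E mulmx1.
- by rewrite mulmx1.
- by move=> u; rewrite mulmx1 mul1mx.
Qed.

Local Close Scope ring_scope.

Lemma main_lemma (n : nat) (C : rmod k Q -> Prop) (v : Q0 Q) :
  connected_quiver Q -> (2 <= n)%N -> n_cluster_tilting n C ->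
  [/\ (outdeg v = 2 -> (1 <= indeg v)%N),
      (indeg v = 2 -> (1 <= outdeg v)%N) &
      (indeg v = 2 -> outdeg v = 2 -> n = 2)].
Proof.
move=> _ Hn [_ Hc1 Hc2].
have CP : C (Pv v).
  apply/Hc1 => i /andP [Hi _] Y _; case: i Hi => // i _.
  exact: (proj_ext (@PC_proj 1 (fun _ => v))).
have CI : C (Iv v).
  apply/Hc2 => i /andP [Hi _] Y _; case: i Hi => // i _.
  exact: Iv_ext.
have E1 : ext_vanish 1 (Iv v) (Pv v).
  by apply: (proj1 (Hc1 _) CI) => //; rewrite (leq_trans _ Hn).
have out2 : outdeg v = 2 -> exists a0 a1, [/\ qs a0 = v, qs a1 = v & a0 != a1].
  move=> Ho; have : (1 < outdeg v)%N by rewrite Ho.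
  case/card_gt1P => x [y [xin yin xy]]; move: xin yin; rewrite !inE => /eqP xv /eqP yv.
  by exists x, y.
have in2 : indeg v = 2 -> exists c0 c1, [/\ qt c0 = v, qt c1 = v & c0 != c1].
  move=> Ho; have : (1 < indeg v)%N by rewrite Ho.
  case/card_gt1P => x [y [xin yin xy]]; move: xin yin; rewrite !inE => /eqP xv /eqP yv.
  by exists x, y.
have Kdata : indeg v = 2 -> exists (q0 : 'I_(nn (@lT v))) (Hq0 : dgl q0) (b0 : 'I_(@kk v)),
    @lk v q0 b0 = v.
  case/in2 => c0 [c1 [H0 H1 c01]].
  pose t0 := enum_rank (exist _ c0 (introT eqP H0) : TT v).
  pose t1 := enum_rank (exist _ c1 (introT eqP H1) : TT v).
  have tv0 : tv t0 = c0 by rewrite /tv /t0 enum_rankK.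
  have tv1 : tv t1 = c1 by rewrite /tv /t1 enum_rankK.
  have Hq0 : qs c0 == lT t0 by rewrite /lT tv0.
  have Hq1 : qs c1 == lT t1 by rewrite /lT tv1.
  pose q0 := enum_rank (pcx Hq0); pose q1 := enum_rank (pcx Hq1).
  have d0 : dgl q0 by rewrite /dgl /q0 ev_rank /= tv0.
  have d1 : dgl q1 by rewrite /dgl /q1 ev_rank /= tv1.
  have nq : q0 != q1.
    apply/eqP => E; have := congr1 (ev (@lT v)) E; rewrite /q0 /q1 !ev_rank /=.
    by case=> _ E'; rewrite E' eqxx in c01.
  have [b0 Eb0 _] := unlift_some nq.
  exists q0, d0, b0; rewrite /lk -Eb0; exact: dgl_nl d1.
split.
- move=> Ho; rewrite lt0n; apply/negP => /eqP Hi.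
  have Hno : forall t : 'I_(mT v), False.
    move=> t; have := card0_eq Hi (tv t); rewrite !inE tvP //.
  have [a0 [a1 [H0 H1 a01]]] := out2 Ho.
  apply: (@L_ext1 1 (fun _ => v) v ord0 a0 a1 erefl H0 H1 a01).
  exact: (E1 _ _ _ (epsA_res Hno)).
- move=> Hi; rewrite lt0n; apply/negP => /eqP Ho.
  have Hout : forall a, qs a != v.
    move=> a; apply/negP => /eqP Ha; have := card0_eq Ho a; rewrite !inE Ha eqxx //.
  have [q0 [Hq0 [b0 Hb0]]] := Kdata Hi.
  exact: (L_extb Hb0 Hout (Iv_res Hq0) E1).
- move=> Hi Ho; case: (eqVneq n 2) => // n2; exfalso.
  have Hn3 : (2 < n)%N by rewrite ltn_neqAle eq_sym n2 Hn.
  have E2 : ext_vanish 2 (Iv v) (Pv v) by apply: (proj1 (Hc1 _) CI) => //; rewrite Hn3.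
  have [a0 [a1 [H0 H1 a01]]] := out2 Ho.
  have [q0 [Hq0 [b0 Hb0]]] := Kdata Hi.
  apply: (@L_ext1 _ (@lk v q0) v b0 a0 a1 Hb0 H0 H1 a01).
  exact: (E2 _ _ _ (Iv_res Hq0)).
Qed.

End Main.

Unset Implicit Arguments.
Local Close Scope ring_scope.

Theorem lemma2p3 (k : fieldType) (Q : quiver) (n : nat)
  (C : rmod k Q -> Prop) (v : Q0 Q) :
  connected_quiver Q -> (2 <= n)%N -> n_cluster_tilting n C ->
  [/\ (outdeg v = 2 -> (1 <= indeg v)%N),
      (indeg v = 2 -> (1 <= outdeg v)%N) &
      (indeg v = 2 -> outdeg v = 2 -> n = 2)].
Proof. exact: main_lemma. Qed.
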